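(* Let $k$ be a field with $\mathrm{char}(k)\neq2$, let $m\in\{3,4\}$, and let $Q_1,Q_2$ be quadratic forms in $m$ variables over $k$ with matrices of second partial derivatives $A$ and $B$. Assume that $\ker(A)\cap\ker(B)=0$ (i.e. $\{Q_1=Q_2=0\}\subset\mathbb{P}^{m-1}$ is not a cone) and that the binary form $\det(Ax+Bz)$ is identically zero. Then: (i) if $m=3$, $(Q_1,Q_2)$ is $k$-equivalent to $(x_1x_2,\ x_2x_3)$; (ii) if $m=4$, $(Q_1,Q_2)$ is $k$-equivalent to $(x_1x_2,\ x_2x_3-x_4^2)$.
   Context: Two pairs of quadratic forms in $m$ variables over $k$ are $k$-equivalent if they lie in the same orbit of $GL_2(k)\times GL_m(k)$, where $(M,N)$ acts by replacing $(Q_1,Q_2)$ by $(m_{11}Q_1+m_{12}Q_2,\ m_{21}Q_1+m_{22}Q_2)$ and then substituting $x_j\leftarrow\sum_i n_{ij}x_i$. *)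

(* Defs.v *)
From HB Require Import structures.
From mathcomp Require Import all_boot all_order all_algebra.
From mathcomp Require Import mpoly.
Set Implicit Arguments.
Unset Strict Implicit.
Unset Printing Implicit Defensive.
Import GRing.Theory.
Local Open Scope ring_scope.

Definition quadratic_form (k : fieldType) (m : nat) (Q : {mpoly k[m]}) : Prop :=
  Q \is 2.-homog.

(* Matrix of second partial derivatives (its entries are constants). *)
Definition hessian (k : fieldType) (m : nat) (Q : {mpoly k[m]}) : 'M[k]_m :=
  \matrix_(i, j) (mderiv i (mderiv j Q))@_0%MM.

Definition kernels_meet_trivially (k : fieldType) (m : nat) (A B : 'M[k]_m) : Prop :=
  forall v : 'cV[k]_m, A *m v = 0 -> B *m v = 0 -> v = 0.

Definition pencil_det (k : fieldType) (m : nat) (A B : 'M[k]_m) : {mpoly k[2]} :=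
  \det (('X_0 : {mpoly k[2]}) *: map_mx (fun a => a%:MP) A
        + ('X_1 : {mpoly k[2]}) *: map_mx (fun a => a%:MP) B).

Definition lin_subst (k : fieldType) (m : nat) (N : 'M[k]_m) : m.-tuple {mpoly k[m]} :=
  [tuple \sum_(i < m) N i j *: 'X_i | j < m].

Definition k_equivalent (k : fieldType) (m : nat) (Q1 Q2 P1 P2 : {mpoly k[m]}) : Prop :=
  exists (M : 'M[k]_2) (N : 'M[k]_m),
    [/\ M \in unitmx, N \in unitmx,
        (M 0 0 *: Q1 + M 0 1 *: Q2) \mPo lin_subst N = P1
      & (M 1 0 *: Q1 + M 1 1 *: Q2) \mPo lin_subst N = P2].

(* Main.v *)
Require Import Defs.
From HB Require Import structures.
From mathcomp Require Import all_boot all_order all_algebra.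
From mathcomp Require Import mpoly.
From mathcomp Require Import zify ring lra.
From Stdlib Require Import Classical.
Import GRing.Theory.
Local Open Scope ring_scope.
Set Implicit Arguments. Unset Strict Implicit.

Section MP.
Variables (k : fieldType) (n : nat).
Implicit Types (p q : {mpoly k[n]}) (S T : 'M[k]_n).

Lemma mderivXU (a j : 'I_n) : mderiv j ('X_a : {mpoly k[n]}) = ((a == j)%:R)%:MP.
Proof.
rewrite mderivX mnm1E; case: eqP => [->|_].
  have -> : (U_(j) - U_(j))%MM = 0%MM by apply/mnmP => i; rewrite mnmBE mnm0E subnn.
  by rewrite mpolyX0 scale1r.
by rewrite scale0r.
Qed.

Definition qf S : {mpoly k[n]} := \sum_i \sum_j S i j *: ('X_i * 'X_j).

Lemma qfD S T : qf (S + T) = qf S + qf T.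
Proof.
rewrite /qf -big_split /=; apply: eq_bigr => i _; rewrite -big_split /=.
by apply: eq_bigr => j _; rewrite mxE scalerDl.
Qed.
Lemma qfZ c S : qf (c *: S) = c *: qf S.
Proof.
rewrite /qf scaler_sumr; apply: eq_bigr => i _; rewrite scaler_sumr.
by apply: eq_bigr => j _; rewrite mxE scalerA.
Qed.
Lemma qf0 : qf 0 = 0.
Proof. by rewrite -(scale0r (0 : 'M[k]_n)) qfZ scale0r. Qed.

Lemma qf_delta a b : qf (delta_mx a b) = 'X_a * 'X_b.
Proof.
rewrite /qf (bigD1 a) //= [X in _ + X]big1 => [|i nia]; last first.
  by apply: big1 => j _; rewrite mxE (negbTE nia) scale0r.
rewrite addr0 (bigD1 b) //= big1 => [|j njb]; last by rewrite mxE (negbTE njb) andbF scale0r.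
by rewrite mxE !eqxx scale1r addr0.
Qed.

Lemma hessianD p q : hessian (p + q) = hessian p + hessian q.
Proof. by apply/matrixP => i j; rewrite !mxE !mderivD mcoeffD. Qed.
Lemma hessianZ c p : hessian (c *: p) = c *: hessian p.
Proof. by apply/matrixP => i j; rewrite !mxE !mderivZ mcoeffZ. Qed.
Lemma hessian0 : hessian (0 : {mpoly k[n]}) = 0.
Proof. by apply/matrixP => i j; rewrite !mxE !mderiv0 mcoeff0. Qed.

Lemma hessian_sym p : (hessian p)^T = hessian p.
Proof. by apply/matrixP => i j; rewrite !mxE mderiv_comm. Qed.

Lemma natb (b : bool) : (b%:R : k) = if b then 1 else 0.
Proof. by case: b. Qed.

Lemma hessian_XX (a b : 'I_n) : hessian ('X_a * 'X_b : {mpoly k[n]}) = delta_mx b a + delta_mx a b.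
Proof.
apply/matrixP => i j; rewrite !mxE !mderivM !mderivD !mderivM !mderivXU !mderivC.
rewrite !mulr0 !mul0r !addr0 !add0r -!rmorphM !mcoeffD !mcoeffC eqxx !mulr1.
rewrite !natb [j == a]eq_sym [i == b]eq_sym [i == a]eq_sym [j == b]eq_sym.
by do 4 case: eqP => _ /=; rewrite ?mulr1 ?mulr0 ?addr0 ?add0r.
Qed.

Lemma mdeg2 (m : 'X_{1..n}) : mdeg m = 2%N -> exists a b, m = (U_(b) + U_(a))%MM.
Proof.
move=> hm.
have [a ha] : exists a, m a != 0%N.
  apply/not_all_not_ex => h; suff : m = 0%MM by move=> e; rewrite e mdeg0 in hm.
  by apply/mnmP => i; rewrite mnm0E; case: (eqVneq (m i) 0%N) (h i).
have le : (U_(a) <= m)%MM.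
  by apply/mnm_lepP => i; rewrite mnm1E; case: eqP => // <-; rewrite lt0n.
have e := submK le.
have : mdeg (m - U_(a)) = 1%N by move: hm; rewrite -{1}e mdegD mdeg1 addn1 => -[].
move/eqP/mdeg1P => [b /eqP hb]; exists a, b; by rewrite -hb e.
Qed.

Lemma qf_hessian_X (m : 'X_{1..n}) : mdeg m = 2%N ->
  qf (hessian ('X_[m] : {mpoly k[n]})) = 2%:R *: 'X_[m].
Proof.
case/mdeg2 => a [b ->]; rewrite mpolyXD hessian_XX qfD !qf_delta scaler_nat.
by rewrite mulrC mulr2n.
Qed.

Lemma qf_hessian_sum (I : Type) (s : seq I) (F : I -> {mpoly k[n]}) :
  qf (hessian (\sum_(x <- s) F x)) = \sum_(x <- s) qf (hessian (F x)).
Proof.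
elim: s => [|x s IH]; first by rewrite !big_nil hessian0 qf0.
by rewrite !big_cons hessianD qfD IH.
Qed.

Lemma qf_hessian p : p \is 2.-homog -> qf (hessian p) = 2%:R *: p.
Proof.
move/dhomogP => hp; rewrite {1 2}[p]mpolyE qf_hessian_sum scaler_sumr big_seq [RHS]big_seq.
apply: eq_bigr => x hx; rewrite hessianZ qfZ qf_hessian_X ?hp //.
by rewrite !scalerA mulrC.
Qed.

Lemma lin_substE (N : 'M[k]_n) (j : 'I_n) : (lin_subst N)`_j = \sum_i N i j *: 'X_i.
Proof. by rewrite -tnth_nth tnth_mktuple. Qed.

Lemma qf_comp S (N : 'M[k]_n) : qf S \mPo lin_subst N = qf (N *m S *m N^T).
Proof.
rewrite /qf raddf_sum /=.
transitivity (\sum_i \sum_p \sum_j \sum_l (N i j * S j l * N p l) *: ('X_i * 'X_p) : {mpoly k[n]}).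
  under eq_bigr => j _ do rewrite raddf_sum /=.
  under eq_bigr => j _ do under eq_bigr => l _ do
    rewrite comp_mpolyZ rmorphM /= !comp_mpolyXU !lin_substE big_distrlr /= scaler_sumr.
  under eq_bigr => j _ do rewrite exchange_big /=.
  rewrite exchange_big /=; apply: eq_bigr => i _.
  under eq_bigr => j _ do under eq_bigr => l _ do rewrite scaler_sumr.
  under eq_bigr => j _ do rewrite exchange_big /=.
  rewrite exchange_big /=; apply: eq_bigr => p _.
  apply: eq_bigr => j _; apply: eq_bigr => l _.
  by rewrite -scalerAl -scalerAr !scalerA [S j l * _]mulrC.
apply: eq_bigr => i _; apply: eq_bigr => p _.
rewrite !mxE scaler_suml exchange_big /=; apply: eq_bigr => l _.
rewrite !mxE mulr_suml scaler_suml; apply: eq_bigr => j _.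
by [].
Qed.
End MP.

Section BL.
Variables (k : fieldType) (m : nat).
Definition bl (A : 'M[k]_m) (x y : 'rV[k]_m) : k := (x *m A *m y^T) 0 0.
Lemma blDl A x y z : bl A (x + y) z = bl A x z + bl A y z.
Proof. by rewrite /bl !mulmxDl mxE. Qed.
Lemma blDr A x y z : bl A z (x + y) = bl A z x + bl A z y.
Proof. by rewrite /bl linearD /= mulmxDr mxE. Qed.
Lemma blZl A c x z : bl A (c *: x) z = c * bl A x z.
Proof. by rewrite /bl -!scalemxAl mxE. Qed.
Lemma blZr A c x z : bl A z (c *: x) = c * bl A z x.
Proof. by rewrite /bl linearZ /= -scalemxAr mxE. Qed.
Lemma bl_sym A x y : A^T = A -> bl A x y = bl A y x.
Proof.
move=> sA; rewrite /bl [in LHS](_ : x *m A *m y^T = (y *m A *m x^T)^T) ?mxE //.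
by rewrite !trmx_mul trmxK sA mulmxA.
Qed.
Lemma bl0l A x y : x *m A = 0 -> bl A x y = 0.
Proof. by move=> h; rewrite /bl h mul0mx mxE. Qed.
Lemma bl_rows A (n : nat -> 'rV[k]_m) i j :
  ((\matrix_(i < m) n i) *m A *m (\matrix_(i < m) n i)^T) i j = bl A (n i) (n j).
Proof.
rewrite /bl !mxE; apply: eq_bigr => l _; rewrite !mxE; congr (_ * _).
by apply: eq_bigr => s _; rewrite !mxE.
Qed.
End BL.

Definition blE := (blDl, blDr, blZl, blZr).

Definition nok (k : fieldType) m (A B : 'M[k]_m) :=
  forall x : 'rV[k]_m, x *m A = 0 -> x *m B = 0 -> x = 0.
Definition good (k : fieldType) m (A B : 'M[k]_m) := exists v0 v1 : 'rV[k]_m,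
  [/\ v0 *m A = 0, v1 *m A + v0 *m B = 0, v1 *m B = 0 & v0 != 0].
Definition meq (k : fieldType) m (A B A' B' : 'M[k]_m) :=
  exists (M : 'M[k]_2) (N : 'M[k]_m), [/\ M \in unitmx, N \in unitmx,
    N *m (M 0 0 *: A + M 0 1 *: B) *m N^T = A' &
    N *m (M 1 0 *: A + M 1 1 *: B) *m N^T = B'].

Lemma gram_unit (k : fieldType) m (A B A' B' N : 'M[k]_m) :
  N *m A *m N^T = A' -> N *m B *m N^T = B' -> nok A' B' -> N \in unitmx.
Proof.
move=> hA hB nk; rewrite -row_free_unit -kermx_eq0; apply/eqP/row_matrixP => i.
rewrite row0; have /sub_kermxP hc := row_sub i (kermx N).
by apply: nk; rewrite -?hA -?hB !mulmxA hc !mul0mx.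
Qed.

Lemma meq_gram (k : fieldType) m (A B A' B' N : 'M[k]_m) :
  N *m A *m N^T = A' -> N *m B *m N^T = B' -> nok A' B' -> meq A B A' B'.
Proof.
move=> hA hB nk; exists 1%:M, N; split; rewrite ?unitmx1 ?(gram_unit hA hB nk) //.
  by rewrite !mxE /= scale1r scale0r addr0.
by rewrite !mxE /= scale1r scale0r add0r.
Qed.

Lemma sum3 (V : nmodType) (F : 'I_3 -> V) :
  \sum_i F i = F (@Ordinal 3 0 isT) + F (@Ordinal 3 1 isT) + F (@Ordinal 3 2 isT).
Proof. rewrite !big_ord_recr big_ord0 /= add0r; congr (F _ + F _ + F _); exact: val_inj. Qed.

Definition TA (k : fieldType) m : 'M[k]_m :=
  \matrix_(i, j) ((((i : nat) == 0%N) && ((j : nat) == 1%N)) || ((i == 1%N :> nat) && (j == 0%N :> nat)))%:R.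
Definition TB3 (k : fieldType) : 'M[k]_3 :=
  \matrix_(i, j) ((((i : nat) == 1%N) && ((j : nat) == 2%N)) || ((i == 2%N :> nat) && (j == 1%N :> nat)))%:R.

Lemma nok_T3 (k : fieldType) : nok (TA k 3) (TB3 k).
Proof.
move=> x hA hB.
have e0 := congr1 (fun M : 'rV[k]_3 => M 0 (@Ordinal 3 0 isT)) hA.
have e1 := congr1 (fun M : 'rV[k]_3 => M 0 (@Ordinal 3 1 isT)) hA.
have e2 := congr1 (fun M : 'rV[k]_3 => M 0 (@Ordinal 3 1 isT)) hB.
move: e0 e1 e2; rewrite !mxE !sum3 /= !mxE /= !mulr0 !mulr1 ?addr0 ?add0r => e0 e1 e2.
apply/matrixP => i j; rewrite !ord1 mxE.
case: j => [[|[|[|j]]] hj] //=; [move: e1|move: e0|move: e2]; 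
  by rewrite ?mxE => <-; congr (x 0 _); apply: val_inj.
Qed.

Lemma bl_delta (k : fieldType) m (A : 'M[k]_m) x j :
  bl A x (delta_mx 0 j) = (x *m A) 0 j.
Proof. by rewrite /bl trmx_delta -colE mxE. Qed.

Section Setup.
Variables (k : fieldType) (m : nat) (A B : 'M[k]_m) (v0 v1 : 'rV[k]_m).
Hypotheses (sA : A^T = A) (sB : B^T = B) (h0 : v0 *m A = 0)
  (h1 : v1 *m A + v0 *m B = 0) (h2 : v1 *m B = 0).
Lemma fA0 x : bl A v0 x = 0. Proof. exact: bl0l. Qed.
Lemma fA0' x : bl A x v0 = 0. Proof. by rewrite bl_sym // fA0. Qed.
Lemma fB1 x : bl B v1 x = 0. Proof. exact: bl0l. Qed.
Lemma fB1' x : bl B x v1 = 0. Proof. by rewrite bl_sym // fB1. Qed.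
Lemma hAB x : bl A v1 x = - bl B v0 x.
Proof.
rewrite /bl; have -> : v1 *m A = - (v0 *m B) by apply/eqP; rewrite -addr_eq0 h1.
by rewrite mulNmx mxE.
Qed.
Lemma fA11 : bl A v1 v1 = 0. Proof. by rewrite hAB bl_sym // fB1 oppr0. Qed.
Lemma fB00 : bl B v0 v0 = 0.
Proof. by apply: oppr_inj; rewrite -hAB bl_sym // fA0 oppr0. Qed.
Lemma fAu1 x : bl A x v1 = bl A v1 x. Proof. by rewrite bl_sym. Qed.
Lemma fBu0 x : bl B x v0 = - bl A v1 x. Proof. by rewrite bl_sym // hAB opprK. Qed.
End Setup.

Lemma good_basics (k : fieldType) m (A B : 'M[k]_m) (v0 v1 : 'rV[k]_m) :
  nok A B -> v1 *m A + v0 *m B = 0 -> v0 *m A = 0 -> v0 != 0 ->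
  exists j : 'I_m, (v1 *m A) 0 j != 0.
Proof.
move=> nk h1 h0 nz; apply/not_all_not_ex => hn; case/eqP: nz; apply: nk => //.
have -> : v0 *m B = - (v1 *m A) by apply/eqP; rewrite -addr_eq0 addrC h1.
apply/eqP; rewrite oppr_eq0; apply/eqP/matrixP => i j; rewrite ord1 [RHS]mxE.
by case: (eqVneq ((v1 *m A) 0 j) 0) (hn j).
Qed.

Lemma nf3 (k : fieldType) (two : (2 : k) != 0) (A B : 'M[k]_3) :
  A^T = A -> B^T = B -> nok A B -> good A B -> meq A B (TA k 3) (TB3 k).
Proof.
move=> sA sB nk [v0 [v1 [h0 h1 h2 nz]]].
have [j hj] := good_basics nk h1 h0 nz.
set u : 'rV[k]_3 := delta_mx 0 j.
have [al eal] : exists al, (v1 *m A) 0 j = al by eexists.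
have fA1u : bl A v1 u = al by rewrite bl_delta.
rewrite eal in hj.
have [a ea] : exists a, bl A u u = a by eexists.
have [b eb] : exists b, bl B u u = b by eexists.
pose n (i : nat) := if i == 0%N then al^-1 *: v1 else if i == 1%N then
   u + (b / (2 * al)) *: v0 + (- (a / (2 * al))) *: v1 else (- al^-1) *: v0.
have fA0 := fA0 h0; have fA0' := fA0' sA h0; have fB1 := fB1 h2.
have fB1' := fB1' sB h2; have fA11 := fA11 sB h1 h2; have fB00 := fB00 sA h0 h1.
have fAu1 : bl A u v1 = al by rewrite fAu1.
have fB0u : bl B v0 u = - al by rewrite -fA1u (hAB h1) opprK.
have fBu0 : bl B u v0 = - al by rewrite bl_sym.
apply: (@meq_gram _ _ _ _ _ _ (\matrix_(i < 3) n i)); last exact: nok_T3.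
- apply/matrixP => i i'; rewrite bl_rows mxE.
  case: i => [[|[|[|?]]] ?] //; case: i' => [[|[|[|?]]] ?] //=;
  rewrite !blE ?fA0 ?fA0' ?fA11 ?fAu1 ?fA1u ?ea; field; by rewrite ?hj ?two.
- apply/matrixP => i i'; rewrite bl_rows mxE.
  case: i => [[|[|[|?]]] ?] //; case: i' => [[|[|[|?]]] ?] //=;
  rewrite !blE ?fB1 ?fB1' ?fB00 ?fBu0 ?fB0u ?eb; field; by rewrite ?hj ?two.
Qed.

Lemma sum2 (V : nmodType) (F : 'I_2 -> V) : \sum_i F i = F 0 + F 1.
Proof. rewrite !big_ord_recr big_ord0 /= add0r; congr (F _ + F _); exact: val_inj. Qed.

Lemma meq_trans (k : fieldType) m (A B A' B' A'' B'' : 'M[k]_m) :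
  meq A B A' B' -> meq A' B' A'' B'' -> meq A B A'' B''.
Proof.
move=> [M1 [N1 [uM1 uN1 hA hB]]] [M2 [N2 [uM2 uN2 hA' hB']]].
have key c d : N2 *m (c *: A' + d *: B') *m N2^T = (N2 *m N1) *m
   ((c * M1 0 0 + d * M1 1 0) *: A + (c * M1 0 1 + d * M1 1 1) *: B) *m (N2 *m N1)^T.
  rewrite -hA -hB.
  set X := (_ *: A + _ *: B); set Y := (_ *: A + _ *: B).
  have -> : c *: (N1 *m X *m N1^T) + d *: (N1 *m Y *m N1^T) = N1 *m (c *: X + d *: Y) *m N1^T.
    by rewrite [in RHS]mulmxDr [in RHS]mulmxDl -!scalemxAr -!scalemxAl.
  rewrite trmx_mul !mulmxA; congr (_ *m _ *m _ *m _).
  by rewrite /X /Y !scalerDr !scalerDl !scalerA addrACA.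
exists (M2 *m M1), (N2 *m N1); split; rewrite ?unitmx_mul ?uM1 ?uM2 ?uN1 ?uN2 //.
  by rewrite -hA' key !mxE !sum2.
by rewrite -hB' key !mxE !sum2.
Qed.

Lemma sum4 (V : nmodType) (F : 'I_4 -> V) :
  \sum_i F i = F (@Ordinal 4 0 isT) + F (@Ordinal 4 1 isT) + F (@Ordinal 4 2 isT) + F (@Ordinal 4 3 isT).
Proof. rewrite !big_ord_recr big_ord0 /= add0r; congr (F _ + F _ + F _ + F _); exact: val_inj. Qed.

Definition TB4 (k : fieldType) : 'M[k]_4 := \matrix_(i, j)
  (if (((i : nat) == 1%N) && ((j : nat) == 2%N)) || ((i == 2%N :> nat) && (j == 1%N :> nat)) then 1
   else if ((i : nat) == 3%N) && ((j : nat) == 3%N) then -2 else 0).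
Definition GA (k : fieldType) (g : k) : 'M[k]_4 := \matrix_(i, j)
  (if (((i : nat) == 0%N) && ((j : nat) == 1%N)) || ((i == 1%N :> nat) && (j == 0%N :> nat)) then 1
   else if ((i : nat) == 3%N) && ((j : nat) == 3%N) then g else 0).
Definition GB (k : fieldType) (g : k) : 'M[k]_4 := \matrix_(i, j)
  (if (((i : nat) == 1%N) && ((j : nat) == 2%N)) || ((i == 2%N :> nat) && (j == 1%N :> nat)) then 1
   else if ((i : nat) == 3%N) && ((j : nat) == 3%N) then g else 0).

Lemma nok_T4 (k : fieldType) (two : (2 : k) != 0) : nok (TA k 4) (TB4 k).
Proof.
move=> x hA hB.
have e0 := congr1 (fun M : 'rV[k]_4 => M 0 (@Ordinal 4 0 isT)) hA.
have e1 := congr1 (fun M : 'rV[k]_4 => M 0 (@Ordinal 4 1 isT)) hA.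
have e2 := congr1 (fun M : 'rV[k]_4 => M 0 (@Ordinal 4 1 isT)) hB.
have e3 := congr1 (fun M : 'rV[k]_4 => M 0 (@Ordinal 4 3 isT)) hB.
move: e0 e1 e2 e3; rewrite !mxE !sum4 /= !mxE /= !mulr0 ?mulr1 ?addr0 ?add0r => e0 e1 e2.
move/eqP; rewrite mulf_eq0 oppr_eq0 (negbTE two) orbF => /eqP e3.
apply/matrixP => i j; rewrite !ord1 mxE.
case: j => [[|[|[|[|j]]]] hj] //=; [move: e1|move: e0|move: e2|move: e3];
  by rewrite ?mxE => <-; congr (x 0 _); apply: val_inj.
Qed.

Lemma blDm (k : fieldType) m (A B : 'M[k]_m) x y : bl (A + B) x y = bl A x y + bl B x y.
Proof. by rewrite /bl mulmxDr mulmxDl mxE. Qed.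
Lemma blZm (k : fieldType) m (A : 'M[k]_m) c x y : bl (c *: A) x y = c * bl A x y.
Proof. by rewrite /bl -scalemxAr -scalemxAl mxE. Qed.
Lemma bl_ee (k : fieldType) m (G : 'M[k]_m) i j : bl G (delta_mx 0 i) (delta_mx 0 j) = G i j.
Proof. by rewrite bl_delta -rowE mxE. Qed.

Lemma meq_gramM (k : fieldType) m (A B A' B' : 'M[k]_m) (M : 'M[k]_2) N :
  M \in unitmx -> N *m (M 0 0 *: A + M 0 1 *: B) *m N^T = A' ->
  N *m (M 1 0 *: A + M 1 1 *: B) *m N^T = B' -> nok A' B' -> meq A B A' B'.
Proof. by move=> uM hA hB nk; exists M, N; split; rewrite ?(gram_unit hA hB nk). Qed.

Lemma stepC (k : fieldType) (two : (2 : k) != 0) (g g' : k) :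
  (g != 0) || (g' != 0) -> meq (GA g) (GB g') (TA k 4) (TB4 k).
Proof.
pose e (i : 'I_4) : 'rV[k]_4 := delta_mx 0 i.
pose o0 := @Ordinal 4 0 isT; pose o1 := @Ordinal 4 1 isT.
pose o2 := @Ordinal 4 2 isT; pose o3 := @Ordinal 4 3 isT.
have [z|nz] := eqVneq g' 0; rewrite ?orbF => hg.
- pose M : 'M[k]_2 := \matrix_(i, j) (if (i : nat) == 0%N then (if (j : nat) == 0%N then 0 else 1)
     else (if (j : nat) == 0%N then - (2 / g) else 0)).
  pose Mi : 'M[k]_2 := \matrix_(i, j) (if (i : nat) == 0%N then (if (j : nat) == 0%N then 0 else - (g / 2))
     else (if (j : nat) == 0%N then 1 else 0)).
  have uM : M \in unitmx.
    suff /mulmx1_unit [] : M *m Mi = 1%:M by [].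
    apply/matrixP => i j; rewrite !mxE sum2 !mxE /=.
    case: i => [[|[|?]] ?] //; case: j => [[|[|?]] ?] //=; field; by rewrite ?hg ?two.
  pose r (i : nat) := if i == 0%N then e o2 else if i == 1%N then e o1 else
     if i == 2%N then (- (g / 2)) *: e o0 else e o3.
  apply: (@meq_gramM _ _ _ _ _ _ M (\matrix_(i < 4) r i) uM); last exact: nok_T4.
  + apply/matrixP => i j; rewrite bl_rows !mxE /=.
    case: i => [[|[|[|[|?]]]] ?] //; case: j => [[|[|[|[|?]]]] ?] //=;
    rewrite !(blDm, blZm, blE) !bl_ee !mxE /= ?z; field; by rewrite ?hg ?two.
  + apply/matrixP => i j; rewrite bl_rows !mxE /=.
    case: i => [[|[|[|[|?]]]] ?] //; case: j => [[|[|[|[|?]]]] ?] //=;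
    rewrite !(blDm, blZm, blE) !bl_ee !mxE /= ?z; field; by rewrite ?hg ?two.
- pose M : 'M[k]_2 := \matrix_(i, j) (if (i : nat) == 0%N then (if (j : nat) == 0%N then 1 else - (g / g'))
     else (if (j : nat) == 0%N then 0 else - (2 / g'))).
  pose Mi : 'M[k]_2 := \matrix_(i, j) (if (i : nat) == 0%N then (if (j : nat) == 0%N then 1 else - (g / 2))
     else (if (j : nat) == 0%N then 0 else - (g' / 2))).
  have uM : M \in unitmx.
    suff /mulmx1_unit [] : M *m Mi = 1%:M by [].
    apply/matrixP => i j; rewrite !mxE sum2 !mxE /=.
    case: i => [[|[|?]] ?] //; case: j => [[|[|?]] ?] //=; field; by rewrite ?nz ?two.
  pose r (i : nat) := if i == 0%N then e o0 else if i == 1%N then e o1 else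
     if i == 2%N then (- (g / 2)) *: e o0 + (- (g' / 2)) *: e o2 else e o3.
  apply: (@meq_gramM _ _ _ _ _ _ M (\matrix_(i < 4) r i) uM); last exact: nok_T4.
  + apply/matrixP => i j; rewrite bl_rows !mxE /=.
    case: i => [[|[|[|[|?]]]] ?] //; case: j => [[|[|[|[|?]]]] ?] //=;
    rewrite !(blDm, blZm, blE) !bl_ee !mxE /=; field; by rewrite ?nz ?two.
  + apply/matrixP => i j; rewrite bl_rows !mxE /=.
    case: i => [[|[|[|[|?]]]] ?] //; case: j => [[|[|[|[|?]]]] ?] //=;
    rewrite !(blDm, blZm, blE) !bl_ee !mxE /=; field; by rewrite ?nz ?two.
Qed.

Lemma exists_nz_row (k : fieldType) p q (X : 'M[k]_(p, q)) : X != 0 -> exists i, row i X != 0.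
Proof.
move=> nz; apply/not_all_not_ex => h; case/eqP: nz; apply/row_matrixP => i.
by rewrite row0; case: (eqVneq (row i X) 0) (h i).
Qed.

Lemma nf4a (k : fieldType) (two : (2 : k) != 0) (A B : 'M[k]_4) :
  A^T = A -> B^T = B -> nok A B -> good A B ->
  exists g g', ((g != 0) || (g' != 0)) /\ meq A B (GA g) (GB g').
Proof.
move=> sA sB nk [v0 [v1 [h0 h1 h2 nz]]].
have [j hj] := good_basics nk h1 h0 nz.
set u : 'rV[k]_4 := delta_mx 0 j.
have [al eal] : exists al, (v1 *m A) 0 j = al by eexists.
have fA1u : bl A v1 u = al by rewrite bl_delta.
rewrite eal in hj.
have [a ea] : exists a, bl A u u = a by eexists.
have [b eb] : exists b, bl B u u = b by eexists.
pose K := row_mx (A *m v1^T) (row_mx (A *m u^T) (B *m u^T)).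
have : kermx K != 0.
  rewrite -mxrank_eq0 mxrank_ker; have := rank_leq_col K; lia.
case/exists_nz_row => i0; set y := row i0 (kermx K) => nzy.
have /sub_kermxP := row_sub i0 (kermx K); rewrite -/y.
move/eqP; rewrite !mul_mx_row !row_mx_eq0 => /andP [/eqP y1 /andP [/eqP y2 /eqP y3]].
have fyv1 : bl A y v1 = 0 by rewrite /bl -mulmxA y1 mxE.
have fyuA : bl A y u = 0 by rewrite /bl -mulmxA y2 mxE.
have fyuB : bl B y u = 0 by rewrite /bl -mulmxA y3 mxE.
have fv1y : bl A v1 y = 0 by rewrite bl_sym.
have fuyA : bl A u y = 0 by rewrite bl_sym.
have fuyB : bl B u y = 0 by rewrite bl_sym.
have fv0y : bl B v0 y = 0 by apply: oppr_inj; rewrite -(hAB h1) fv1y oppr0.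
have fyv0 : bl B y v0 = 0 by rewrite bl_sym.
have [g eg] : exists g, bl A y y = g by eexists.
have [g' eg'] : exists g', bl B y y = g' by eexists.
have fA0 := fA0 h0; have fA0' := fA0' sA h0; have fB1 := fB1 h2.
have fB1' := fB1' sB h2; have fA11 := fA11 sB h1 h2; have fB00 := fB00 sA h0 h1.
have fAu1 : bl A u v1 = al by rewrite fAu1.
have fB0u : bl B v0 u = - al by rewrite -fA1u (hAB h1) opprK.
have fBu0 : bl B u v0 = - al by rewrite bl_sym.
pose n (i : nat) := if i == 0%N then al^-1 *: v1 else if i == 1%N then
   u + (b / (2 * al)) *: v0 + (- (a / (2 * al))) *: v1 else
   if i == 2%N then (- al^-1) *: v0 else y.
pose N := \matrix_(i < 4) n i.
have gA : N *m A *m N^T = GA g.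
  apply/matrixP => i i'; rewrite bl_rows mxE.
  case: i => [[|[|[|[|?]]]] ?] //; case: i' => [[|[|[|[|?]]]] ?] //=;
  rewrite !blE ?fA0 ?fA0' ?fA11 ?fAu1 ?fA1u ?ea ?fyv1 ?fv1y ?fyuA ?fuyA ?eg; field; by rewrite ?hj ?two.
have gB : N *m B *m N^T = GB g'.
  apply/matrixP => i i'; rewrite bl_rows mxE.
  case: i => [[|[|[|[|?]]]] ?] //; case: i' => [[|[|[|[|?]]]] ?] //=;
  rewrite !blE ?fB1 ?fB1' ?fB00 ?fBu0 ?fB0u ?eb ?fv0y ?fyv0 ?fyuB ?fuyB ?eg'; field; by rewrite ?hj ?two.
have uN : N \in unitmx.
  rewrite -row_free_unit -kermx_eq0; apply/eqP/row_matrixP => i; rewrite row0.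
  have /sub_kermxP := row_sub i (kermx N); move: (row i (kermx N)) => c hc.
  have cA : c *m GA g = 0 by rewrite -gA !mulmxA hc !mul0mx.
  have cB : c *m GB g' = 0 by rewrite -gB !mulmxA hc !mul0mx.
  have e0 := congr1 (fun M : 'rV[k]_4 => M 0 (@Ordinal 4 0 isT)) cA.
  have e1 := congr1 (fun M : 'rV[k]_4 => M 0 (@Ordinal 4 1 isT)) cA.
  have e2 := congr1 (fun M : 'rV[k]_4 => M 0 (@Ordinal 4 1 isT)) cB.
  move: e0 e1 e2; rewrite !mxE !sum4 /= !mxE /= !mulr0 ?mulr1 ?addr0 ?add0r => e0 e1 e2.
  move: hc; rewrite mulmx_sum_row sum4 !rowK /= e0 e1 e2 !scale0r !add0r => /eqP.
  rewrite scaler_eq0 (negbTE nzy) orbF => /eqP e3.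
  apply/matrixP => i' j'; rewrite !ord1 mxE.
  case: j' => [[|[|[|[|?]]]] hj'] //=; [move: e1|move: e0|move: e2|move: e3];
    by rewrite ?mxE => <-; congr (c 0 _); apply: val_inj.
have hg : (g != 0) || (g' != 0).
  apply: contraT; rewrite negb_or !negbK => /andP [/eqP z1 /eqP z2]; case/eqP: nzy.
  have fr : row_free N^T by rewrite row_free_unit unitmx_tr.
  have ry : row (@Ordinal 4 3 isT) N = y by rewrite rowK.
  apply: nk; apply/eqP; rewrite -(mulmx_free_eq0 _ fr) -ry -!row_mul; [rewrite gA|rewrite gB];
    apply/eqP/matrixP => i' j'; rewrite !mxE /= ?z1 ?z2; by case: ifP => //; case: ifP.
exists g, g'; split => //; exists 1%:M, N; split; rewrite ?unitmx1 //.
  by rewrite !mxE /= scale1r scale0r addr0.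
by rewrite !mxE /= scale1r scale0r add0r.
Qed.
Section Chain.
Variables (k : fieldType) (m : nat).
Implicit Types (A B : 'M[k]_m) (v : nat -> 'rV[k]_m).

Definition chain A B v := v 0%N *m A = 0 /\ forall i, v i.+1 *m A + v i *m B = 0.

Lemma tr11 (M : 'M[k]_1) : M^T = M.
Proof. by apply/matrixP=> i j; rewrite !ord1 mxE. Qed.

Lemma bil_sym A (x y : 'rV[k]_m) : A^T = A -> x *m A *m y^T = y *m A *m x^T.
Proof. by move=> sA; rewrite -[LHS]tr11 !trmx_mul trmxK sA mulmxA. Qed.

Lemma chain_iso A B v : A^T = A -> B^T = B -> chain A B v ->
  forall i j, v i *m A *m (v j)^T = 0 /\ v i *m B *m (v j)^T = 0.
Proof.
move=> sA sB [h0 hS].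
have aS i j : v i.+1 *m A *m (v j)^T = - (v i *m B *m (v j)^T).
  by rewrite -mulNmx; congr (_ *m _); apply/eqP; rewrite -addr_eq0 hS.
have a0 j : v 0%N *m A *m (v j)^T = 0 by rewrite h0 mul0mx.
have b0 j : v 0%N *m B *m (v j)^T = 0.
  by rewrite bil_sym // -[LHS]opprK -aS bil_sym // h0 !mul0mx oppr0.
have bS i j : v i.+1 *m B *m (v j)^T = v i *m B *m (v j.+1)^T.
  apply: oppr_inj; by rewrite [v i.+1 *m B *m _]bil_sym // -aS bil_sym // aS.
have b i j : v i *m B *m (v j)^T = 0.
  by elim: i j => [|i IH] j; rewrite ?b0 // bS IH.
move=> i j; split=> //; case: i => [|i]; first exact: a0.
by rewrite aS b oppr0.
Qed.
End Chain.
Lemma entry_bil (k : fieldType) p q m (X : 'M[k]_(p, m)) (M : 'M[k]_m) (Y : 'M[k]_(q, m)) i j :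
  (X *m M *m Y^T) i j = (row i X *m M *m (row j Y)^T) 0 0.
Proof. rewrite !mxE; apply: eq_bigr => l _; rewrite !mxE; congr (_ * _).
by apply: eq_bigr => s _; rewrite !mxE. Qed.

Lemma rank_iso (k : fieldType) m (V : 'M[k]_(3, m)) (A : 'M[k]_m) :
  row_free V -> V *m A *m V^T = 0 -> (\rank (V *m A) <= m - 3)%N.
Proof.
move=> fV h.
have: (V *m A <= kermx V^T)%MS by apply/sub_kermxP.
move/mxrankS; rewrite mxrank_ker mxrank_tr.
by move/eqP: fV => ->.
Qed.

Lemma indep_contra (k : fieldType) m (V : 'M[k]_(3, m)) (A B : 'M[k]_m) :
  (m <= 4)%N ->
  (forall c : 'rV_3, c *m V = 0 -> c = 0) ->
  (forall x : 'rV[k]_m, x *m A = 0 -> x *m B = 0 -> x = 0) ->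
  V *m A *m V^T = 0 -> V *m B *m V^T = 0 -> False.
Proof.
move=> m4 ind nok iA iB.
have fV : row_free V.
  rewrite -kermx_eq0; apply/eqP/row_matrixP => i; rewrite row0; apply: ind.
  by apply/sub_kermxP; exact: row_sub.
have rA := rank_iso fV iA; have rB := rank_iso fV iB.
set K := (kermx (V *m A) :&: kermx (V *m B))%MS.
have hK := mxrank_sum_cap (kermx (V *m A)) (kermx (V *m B)).
rewrite !mxrank_ker in hK.
have hs := rank_leq_col (kermx (V *m A) + kermx (V *m B))%MS.
have : (\rank K != 0)%N by rewrite /K; lia.
rewrite mxrank_eq0 => /eqP; apply; apply/row_matrixP => i; rewrite row0.
apply: ind; apply: nok; rewrite -mulmxA; apply/sub_kermxP;
  apply: submx_trans (row_sub i K) _; [exact: capmxSl | exact: capmxSr].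
Qed.


Lemma chain_good (k : fieldType) m (A B : 'M[k]_m) v : (m <= 4)%N ->
  A^T = A -> B^T = B -> nok A B -> chain A B v -> v 0%N != 0 -> good A B.
Proof.
move=> m4 sA sB nk ch nz0; have [h0 hS] := ch.
have e i : v i.+1 *m A = - (v i *m B) by apply/eqP; rewrite -addr_eq0 hS.
case: (classic (exists c, v 1%N = c *: v 0%N)) => [[c hc]|n1].
  case/eqP: nz0; apply: nk => //; apply: oppr_inj; rewrite -e hc.
  by rewrite -scalemxAl h0 scaler0 oppr0.
case: (classic (exists a b, v 2%N = a *: v 0%N + b *: v 1%N)) => [[a [b hab]]|n2].
  exists (v 0%N), (v 1%N - b *: v 0%N); split => //.
    by rewrite mulmxBl -scalemxAl h0 scaler0 subr0 hS.
  rewrite mulmxBl -!scalemxAl; apply/eqP; rewrite subr_eq0; apply/eqP.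
  rewrite -[LHS]opprK -e hab mulmxDl -!scalemxAl h0 scaler0 add0r e.
  by rewrite scalerN opprK.
exfalso.
pose V := \matrix_(i < 3) v i.
apply: (@indep_contra k m V A B) => //.
- move=> c; rewrite mulmx_sum_row sum3 !rowK /=.
  set c0 := c 0 _; set c1 := c 0 _; set c2 := c 0 _.
  have cE : c = \row_j (if val j == 0%N then c0 else if val j == 1%N then c1 else c2).
    apply/matrixP => i j; rewrite !ord1 !mxE.
    by case: j => [[|[|[|j]]] hj] //=; [rewrite /c0|rewrite /c1|rewrite /c2]; congr (c 0 _); apply: val_inj.
  move=> hc; rewrite cE.
  have [z2|nz2] := eqVneq c2 0.
    have [z1|nz1] := eqVneq c1 0.
      move: hc; rewrite z2 z1 !scale0r !addr0 => /eqP; rewrite scaler_eq0.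
      rewrite (negbTE nz0) orbF => /eqP z0.
      by apply/matrixP => i j; rewrite !mxE ?z0 ?z1 ?z2; do 2 case: ifP => //.
    case: n1; exists (- c0 / c1); move: hc; rewrite z2 scale0r addr0.
    move/eqP; rewrite addr_eq0 => /eqP hc; apply/esym.
    by rewrite mulNr scaleNr mulrC -scalerA hc scalerN opprK scalerA mulVf // scale1r.
  case: n2; exists (- c0 / c2), (- c1 / c2).
  move/eqP: hc; rewrite addr_eq0 => /eqP hc; apply/esym.
  rewrite !mulNr !scaleNr -opprD ![_ / c2]mulrC -!scalerA -scalerDr hc.
  by rewrite scalerN opprK scalerA mulVf // scale1r.
- apply/matrixP => i j; rewrite entry_bil !rowK [RHS]mxE.
  by have [-> _] := chain_iso sA sB ch i j; rewrite mxE.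
- apply/matrixP => i j; rewrite entry_bil !rowK [RHS]mxE.
  by have [_ ->] := chain_iso sA sB ch i j; rewrite mxE.
Qed.

Lemma pencil_poly (k : fieldType) m (A B : 'M[k]_m) : pencil_det A B = 0 ->
  \det (\matrix_(i, j) ((A i j)%:P + 'X * (B i j)%:P)) = 0.
Proof.
move=> h.
pose hh := fun i : 'I_2 => if (i : nat) == 0%N then (1 : {poly k}) else 'X.
have -> : \matrix_(i, j) ((A i j)%:P + 'X * (B i j)%:P) =
   map_mx (mmap (@polyC k) hh) (('X_0 : {mpoly k[2]}) *: map_mx (fun a => a%:MP) A
        + ('X_1 : {mpoly k[2]}) *: map_mx (fun a => a%:MP) B).
  apply/matrixP => i j; rewrite !mxE mmapD !rmorphM /= !mmapX !mmapC !mmap1U /hh /=.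
  by rewrite mul1r.
by rewrite det_map_mx -/(pencil_det A B) h rmorph0.
Qed.

Lemma good_of_pencil (k : fieldType) m (A B : 'M[k]_m) : (m <= 4)%N ->
  A^T = A -> B^T = B -> nok A B -> pencil_det A B = 0 -> good A B.
Proof.
move=> m4 sA sB nk /pencil_poly hd.
have /det0P [p nzp hp] : \det (\matrix_(i, j) ((A i j)%:P + 'X * (B i j)%:P)) == 0 by rewrite hd.
pose v (i : nat) : 'rV[k]_m := \row_j (p 0 j)`_i.
have hc i l : \sum_j ((p 0 j)`_i * A j l) + (if i == 0%N then 0 else \sum_j ((p 0 j)`_i.-1 * B j l)) = 0.
  transitivity ((((p *m \matrix_(i, j) ((A i j)%:P + 'X * (B i j)%:P)) : 'rV_m) 0 l)`_i);
    last by rewrite hp mxE coef0.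
  rewrite mxE coef_sum.
  case: ifP => [/eqP ->|ni0].
  - rewrite addr0; apply: eq_bigr => j _; rewrite !mxE mulrDr coefD.
    by rewrite mulrA !coefMC coefMX mul0r addr0.
  - rewrite -big_split /=; apply: eq_bigr => j _; rewrite !mxE mulrDr coefD coefMC.
    by rewrite mulrA !coefMC coefMX ni0.
have h0 : v 0%N *m A = 0.
  apply/matrixP => z l; rewrite ord1 !mxE -[RHS](hc 0%N l) /= addr0.
  by apply: eq_bigr => j _; rewrite !mxE.
have hS i : v i.+1 *m A + v i *m B = 0.
  apply/matrixP => z l; rewrite ord1 !mxE -[RHS](hc i.+1 l) /=.
  by congr (_ + _); apply: eq_bigr => j _; rewrite !mxE.
have ex : exists i, v i != 0.
  have [j hj] : exists j, p 0 j != 0.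
    apply/not_all_not_ex => h; case/eqP: nzp; apply/matrixP => z j; rewrite ord1 mxE.
    by case: (eqVneq (p 0 j) 0) (h j).
  exists (size (p 0 j)).-1; apply/eqP => /matrixP /(_ 0 j); rewrite !mxE => e.
  by move: hj; rewrite -lead_coef_eq0 /lead_coef e eqxx.
case: (ex_minnP ex) => s hs hmin.
pose w i := v (i + s)%N.
apply: (@chain_good _ _ _ _ w) => //; split.
- rewrite /w add0n; clear w; case: s hs hmin => [|s] hs hmin //.
  have : v s = 0 by apply/eqP; apply: contraT => /hmin; rewrite ltnn.
  by move/eqP: (hS s); rewrite addr_eq0 => /eqP ->; move=> ->; rewrite mul0mx oppr0.
- by move=> i; rewrite /w addSn hS.
Qed.

Lemma keq_of_meq (k : fieldType) (two : (2 : k) != 0) m (Q1 Q2 P1 P2 : {mpoly k[m]}) T1 T2 :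
  quadratic_form Q1 -> quadratic_form Q2 ->
  meq (hessian Q1) (hessian Q2) T1 T2 -> qf T1 = 2%:R *: P1 -> qf T2 = 2%:R *: P2 ->
  k_equivalent Q1 Q2 P1 P2.
Proof.
move=> q1 q2 [M [N [uM uN e1 e2]]] t1 t2.
have E1 : Q1 = 2%:R^-1 *: qf (hessian Q1) by rewrite qf_hessian // scalerA mulVf ?scale1r.
have E2 : Q2 = 2%:R^-1 *: qf (hessian Q2) by rewrite qf_hessian // scalerA mulVf ?scale1r.
have key c d : (c *: Q1 + d *: Q2) \mPo lin_subst N =
   2%:R^-1 *: qf (N *m (c *: hessian Q1 + d *: hessian Q2) *m N^T).
  rewrite -qf_comp qfD !qfZ -comp_mpolyZ; congr (_ \mPo _).
  by rewrite {1}E1 {1}E2 !scalerA scalerDr !scalerA [c * _]mulrC [d * _]mulrC.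
exists M, N; split => //.
  by rewrite key e1 t1 scalerA mulVf ?scale1r.
by rewrite key e2 t2 scalerA mulVf ?scale1r.
Qed.

Lemma nok_of_ker (k : fieldType) m (A B : 'M[k]_m) : A^T = A -> B^T = B ->
  kernels_meet_trivially A B -> nok A B.
Proof.
move=> sA sB h x hA hB; apply: trmx_inj; rewrite trmx0; apply: h.
  by rewrite -{1}sA -trmx_mul hA trmx0.
by rewrite -{1}sB -trmx_mul hB trmx0.
Qed.

Lemma qf_TA3 (k : fieldType) : qf (TA k 3) = 2%:R *: ('X_0 * 'X_1).
Proof.
have -> : TA k 3 = delta_mx 0 1 + delta_mx 1 0.
  apply/matrixP => i j; rewrite !mxE.
  by case: i => [[|[|[|?]]] ?] //; case: j => [[|[|[|?]]] ?] //=; rewrite ?addr0 ?add0r.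
rewrite qfD !qf_delta scaler_nat; ring.
Qed.
Lemma qf_TB3 (k : fieldType) : qf (TB3 k) = 2%:R *: ('X_1 * 'X_2).
Proof.
have -> : TB3 k = delta_mx 1 2 + delta_mx 2 1.
  apply/matrixP => i j; rewrite !mxE.
  by case: i => [[|[|[|?]]] ?] //; case: j => [[|[|[|?]]] ?] //=; rewrite ?addr0 ?add0r.
rewrite qfD !qf_delta scaler_nat; ring.
Qed.
Lemma qf_TA4 (k : fieldType) : qf (TA k 4) = 2%:R *: ('X_0 * 'X_1).
Proof.
have -> : TA k 4 = delta_mx 0 1 + delta_mx 1 0.
  apply/matrixP => i j; rewrite !mxE.
  by case: i => [[|[|[|[|?]]]] ?] //; case: j => [[|[|[|[|?]]]] ?] //=; rewrite ?addr0 ?add0r.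
rewrite qfD !qf_delta scaler_nat; ring.
Qed.
Lemma qf_TB4 (k : fieldType) : qf (TB4 k) = 2%:R *: ('X_1 * 'X_2 - 'X_3 ^+ 2).
Proof.
have -> : TB4 k = delta_mx 1 2 + delta_mx 2 1 + (- 2%:R) *: delta_mx 3 3.
  apply/matrixP => i j; rewrite !mxE.
  by case: i => [[|[|[|[|?]]]] ?] //; case: j => [[|[|[|[|?]]]] ?] //=; rewrite ?mulr0 ?mulr1 ?addr0 ?add0r.
rewrite !qfD qfZ !qf_delta scaleNr !scaler_nat; ring.
Qed.

Theorem lemma4p11 (k : fieldType) (char2 : ~ (2 \in [pchar k])) :
  (forall Q1 Q2 : {mpoly k[3]},
     quadratic_form Q1 -> quadratic_form Q2 ->
     kernels_meet_trivially (hessian Q1) (hessian Q2) ->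
     pencil_det (hessian Q1) (hessian Q2) = 0 ->
     k_equivalent Q1 Q2 ('X_0 * 'X_1) ('X_1 * 'X_2))
  /\
  (forall Q1 Q2 : {mpoly k[4]},
     quadratic_form Q1 -> quadratic_form Q2 ->
     kernels_meet_trivially (hessian Q1) (hessian Q2) ->
     pencil_det (hessian Q1) (hessian Q2) = 0 ->
     k_equivalent Q1 Q2 ('X_0 * 'X_1) ('X_1 * 'X_2 - 'X_3 ^+ 2)).
Proof.
have two : (2 : k) != 0.
  by apply/negP => h; apply: char2; rewrite inE /= h.
split => Q1 Q2 q1 q2 hk hp.
- have nk := nok_of_ker (hessian_sym Q1) (hessian_sym Q2) hk.
  have gd := good_of_pencil (isT : (3 <= 4)%N) (hessian_sym Q1) (hessian_sym Q2) nk hp.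
  apply: (keq_of_meq two q1 q2 _ (qf_TA3 k) (qf_TB3 k)).
  have := nf3 two (hessian_sym Q1) (hessian_sym Q2) nk gd.
  by [].
- have nk := nok_of_ker (hessian_sym Q1) (hessian_sym Q2) hk.
  have gd := good_of_pencil (isT : (4 <= 4)%N) (hessian_sym Q1) (hessian_sym Q2) nk hp.
  apply: (keq_of_meq two q1 q2 _ (qf_TA4 k) (qf_TB4 k)).
  have [g [g' [hg hm]]] := nf4a two (hessian_sym Q1) (hessian_sym Q2) nk gd.
  exact: meq_trans hm (stepC two hg).
Qed.
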